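(* Let $S$ be a finite set of training examples, each $i\in S$ having weight $w_i>0$ and label $y_i\in Y$, where $Y$ is a finite label set. Let $S$ be partitioned into a finite family $R$ of nonempty leaves, and let $A\subseteq S$ be the set of assessed (seen) examples. For a leaf $\rho\in R$ and $y\in Y$ write $Z_\rho=\sum_{i\in\rho}w_i$, $Z_\rho^y=\sum_{i\in\rho,\,y_i=y}w_i$, $Z_u(\rho)=\sum_{i\in\rho\cap A}w_i$, $Z_u^y(\rho)=\sum_{i\in\rho\cap A,\,y_i=y}w_i$, and let $Z_n=\sum_{i\in S}w_i$, $w=\sum_{i\in S\setminus A}w_i$, $w^y=\sum_{i\in S\setminus A,\,y_i=y}w_i$. Define \[ \epsilon_n := \sum_{\rho\in R}\frac{Z_\rho}{Z_n}\left(-\sum_{y\in Y}\frac{Z_\rho^y}{Z_\rho}\lg\frac{Z_\rho^y}{Z_\rho}\right),\qquad Z_u\epsilon_u(\rho) := -\sum_{y\in Y}Z_u^y(\rho)\lg\frac{Z_u^y(\rho)}{Z_u(\rho)}. \] Assume $Z_u^y(\rho)>0$ for every $\rho\in R$ and $y\in Y$. Then \[ \sum_{\rho\in R} Z_u\epsilon_u(\rho) \;\le\; Z_n\epsilon_n \;\le\; \sum_{\rho\in R}\left[Z_u\epsilon_u(\rho) + w\lg|Y| + \sum_{y\in Y}\bigl(Z_u^y(\rho)+w^y\bigr)\lg\frac{Z_u(\rho)+w}{Z_u^y(\rho)}\right]. \]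
   Context: $\lg$ is the base-2 logarithm with the convention $0\lg 0=0$. $\epsilon_n$ is the conditional label entropy of the leaves (the ''error'' term used for information-gain splitting), computed with all examples; $Z_u\epsilon_u(\rho)$ is the corresponding weighted entropy computed only on the seen examples of leaf $\rho$. *)

(* Defs.v *)
From mathcomp Require Import all_boot.
From Stdlib Require Import Reals.

Set Implicit Arguments.
Unset Strict Implicit.
Unset Printing Implicit Defensive.

Definition lg (x : R) : R := (ln x / ln 2)%R.

Definition plg (p : R) : R := if Req_EM_T p 0 then 0%R else (p * lg p)%R.

Definition rsum {T : finType} (P : pred T) (f : T -> R) : R :=
  \big[Rplus/0%R]_(i | P i) f i.

Section Quantities.
Variables (T Y : finType) (wt : T -> R) (lab : T -> Y) (A : {set T}).

Definition Zl (rho : {set T}) : R := rsum (fun i => i \in rho) wt.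
Definition Zly (rho : {set T}) (y : Y) : R :=
  rsum (fun i => (i \in rho) && (lab i == y)) wt.
Definition Zu (rho : {set T}) : R := rsum (fun i => (i \in rho) && (i \in A)) wt.
Definition Zuy (rho : {set T}) (y : Y) : R :=
  rsum (fun i => [&& i \in rho, i \in A & lab i == y]) wt.
Definition Zn : R := rsum predT wt.
Definition wun : R := rsum (fun i => i \notin A) wt.
Definition wuny (y : Y) : R := rsum (fun i => (i \notin A) && (lab i == y)) wt.

Definition eps_n (P : {set {set T}}) : R :=
  rsum (fun rho => rho \in P)
    (fun rho => (Zl rho / Zn * - rsum predT (fun y => plg (Zly rho y / Zl rho)))%R).

Definition Zu_eps_u (rho : {set T}) : R :=
  (- rsum predT (fun y => Zuy rho y * lg (Zuy rho y / Zu rho)))%R.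
End Quantities.

(* Main.v *)
Require Import Defs.
From HB Require Import structures.
From mathcomp Require Import all_boot.
From Stdlib Require Import Reals Lra Psatz.

Set Implicit Arguments.
Unset Strict Implicit.

HB.instance Definition _ := Monoid.isComLaw.Build R 0%R Rplus (fun a b c => esym (Rplus_assoc a b c)) Rplus_comm Rplus_0_l.

Open Scope R_scope.

Section RS.
Variable T : finType.

Lemma rsum_le (P : pred T) f g : (forall i, P i -> f i <= g i) -> rsum P f <= rsum P g.
Proof. move=> H; rewrite /rsum; apply: (big_ind2 Rle) => //; try lra; move=> *; lra. Qed.

Lemma rsum_ge0 (P : pred T) f : (forall i, P i -> 0 <= f i) -> 0 <= rsum P f.
Proof. move=> H; rewrite /rsum; apply: (big_ind (Rle 0)) => //; try lra; move=> *; lra. Qed.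

Lemma rsum_plus (P : pred T) f g : rsum P (fun i => f i + g i) = rsum P f + rsum P g.
Proof. by rewrite /rsum big_split. Qed.

Lemma rsum_scal (P : pred T) c f : c * rsum P f = rsum P (fun i => c * f i).
Proof.
rewrite /rsum; apply: (big_ind2 (fun x y => c * x = y)); try lra; [move=> ? ? ? ? <- <-; lra|done].
Qed.

Lemma rsum_opp (P : pred T) f : - rsum P f = rsum P (fun i => - f i).
Proof.
rewrite (_ : - rsum P f = -1 * rsum P f); last lra.
rewrite rsum_scal; apply: eq_bigr => i _; lra.
Qed.

Lemma rsum_ext (P : pred T) f g : (forall i, P i -> f i = g i) -> rsum P f = rsum P g.
Proof. by move=> H; rewrite /rsum; apply: eq_bigr. Qed.

Lemma rsum_extP (P Q : pred T) f : (forall i, P i = Q i) -> rsum P f = rsum Q f.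
Proof. by move=> H; rewrite /rsum; apply: eq_bigl. Qed.

Lemma rsum_split (P Q : pred T) f :
  rsum P f = rsum (fun i => P i && Q i) f + rsum (fun i => P i && ~~ Q i) f.
Proof. by rewrite /rsum (bigID Q). Qed.

Lemma rsum_sub (P Q : pred T) f : (forall i, 0 <= f i) -> (forall i, P i -> Q i) ->
  rsum P f <= rsum Q f.
Proof.
move=> H0 H; rewrite (rsum_split Q P) (@rsum_extP (fun i => Q i && P i) P).
  have := @rsum_ge0 (fun i => Q i && ~~ P i) f (fun i _ => H0 i); lra.
by move=> i; case: (boolP (P i)) => Pi; rewrite ?andbT ?andbF ?(H _ Pi).
Qed.
End RS.

Lemma ln2_pos : 0 < ln 2.
Proof. rewrite -ln_1; apply: ln_increasing; lra. Qed.

Lemma ln_le x y : 0 < x -> x <= y -> ln x <= ln y.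
Proof. move=> h [h'|->]; [left; exact: ln_increasing|lra]. Qed.

Lemma ln_divE x y : 0 < x -> 0 < y -> ln (x / y) = ln x - ln y.
Proof. move=> hx hy; rewrite /Rdiv ln_mult ?ln_Rinv //; try lra; exact: Rinv_0_lt_compat. Qed.

Lemma ln_le_sub1 x : 0 < x -> ln x <= x - 1.
Proof. move=> hx; have := exp_ineq1_le (ln x); rewrite exp_ln //; lra. Qed.

Lemma lower_term a c A C : 0 < a -> a <= c -> c <= C -> a <= A ->
  - (a * lg (a / A)) + (/ ln 2 * a + - (A / (C * ln 2)) * c) <= - (c * lg (c / C)).
Proof.
move=> ha hac hcC haA.
have hA : 0 < A by lra.
have hc : 0 < c by lra.
have hC : 0 < C by lra.
have hL := ln2_pos.
rewrite /lg !ln_divE //.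
have h1 : ln c - ln C <= 0 by have := ln_le hc hcC; lra.
have h2 : ln (A * c / (a * C)) <= A * c / (a * C) - 1 by apply: ln_le_sub1;
  apply: Rdiv_lt_0_compat; nra.
rewrite ln_divE ?ln_mult in h2; try nra.
have h3 : a * (ln A + ln c - (ln a + ln C)) <= A * c / C - a.
  have -> : A * c / C - a = a * (A * c / (a * C) - 1) by field; lra.
  apply: Rmult_le_compat_l; lra.
set q := A * c / C in h3.
have hK : - a * (ln a - ln A) + a - q + c * (ln c - ln C) <= 0.
  have : (c - a) * (ln c - ln C) <= 0 by nra.
  lra.
have E : - (c * ((ln c - ln C) / ln 2)) - (- (a * ((ln a - ln A) / ln 2)) + (/ ln 2 * a + - (A / (C * ln 2)) * c))
   = - (- a * (ln a - ln A) + a - q + c * (ln c - ln C)) * / ln 2 by rewrite /q; field; lra.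
have : 0 <= - (- a * (ln a - ln A) + a - q + c * (ln c - ln C)) * / ln 2.
  apply: Rmult_le_pos; [lra| left; exact: Rinv_0_lt_compat].
lra.
Qed.

Lemma upper_term a c A C wy w : 0 < a -> a <= c -> c <= C -> a <= A -> c <= a + wy ->
  C <= A + w -> - (c * lg (c / C)) <= (a + wy) * lg ((A + w) / a).
Proof.
move=> ha hac hcC haA hcw hCw.
have hA : 0 < A by lra.
have hc : 0 < c by lra.
have hC : 0 < C by lra.
have hL := ln2_pos.
rewrite /lg !ln_divE //; try lra.
have h1 := ln_le hC hCw.
have h2 := ln_le ha hac.
have h3 : ln a <= ln (A + w) by apply: ln_le; lra.
have E : (a + wy) * ((ln (A + w) - ln a) / ln 2) - - (c * ((ln c - ln C) / ln 2)) =
  ((a + wy) * (ln (A + w) - ln a) - c * (ln C - ln c)) * / ln 2 by field; lra.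
have : 0 <= ((a + wy) * (ln (A + w) - ln a) - c * (ln C - ln c)) * / ln 2.
  apply: Rmult_le_pos; [nra| left; exact: Rinv_0_lt_compat].
lra.
Qed.

Section Main.
Variables (T Y : finType) (wt : T -> R) (lab : T -> Y) (A : {set T}).
Hypothesis wpos : forall i, 0 < wt i.
Let w0 : forall i, 0 <= wt i. Proof. by move=> i; left. Qed.

Lemma sumZuy rho : rsum predT (Zuy wt lab A rho) = Zu wt A rho.
Proof.
rewrite /Zu /rsum (partition_big lab predT) //.
apply: eq_bigr => y _; apply: eq_bigl => i; by rewrite andbA.
Qed.

Lemma sumZly rho : rsum predT (Zly wt lab rho) = Zl wt rho.
Proof.
rewrite /Zl /rsum (partition_big lab predT) //.
Qed.

Lemma Zuy_Zly rho y : Zuy wt lab A rho y <= Zly wt lab rho y.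
Proof. apply: rsum_sub => // i /and3P [-> _ ->]. done. Qed.

Lemma Zly_Zl rho y : Zly wt lab rho y <= Zl wt rho.
Proof. apply: rsum_sub => // i /andP [-> _]. done. Qed.

Lemma Zuy_Zu rho y : Zuy wt lab A rho y <= Zu wt A rho.
Proof. apply: rsum_sub => // i /and3P [-> -> _]. done. Qed.

Lemma Zl_Zn rho : Zl wt rho <= Zn wt.
Proof. by apply: rsum_sub. Qed.

Lemma Zly_split rho y : Zly wt lab rho y <= Zuy wt lab A rho y + wuny wt lab A y.
Proof.
rewrite /Zly (rsum_split _ (fun i => i \in A)).
apply: Rplus_le_compat.
  right; apply: rsum_extP => i; by case: (i \in rho); case: (i \in A); case: (lab i == y).
apply: rsum_sub => // i /andP [/andP [_ ->] ->]. done.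
Qed.

Lemma Zl_split rho : Zl wt rho <= Zu wt A rho + wun wt A.
Proof.
rewrite /Zl (rsum_split _ (fun i => i \in A)).
apply: Rplus_le_compat; first by right.
apply: rsum_sub => // i /andP [_ ->]. done.
Qed.

End Main.

Theorem mainTheorem4 (T Y : finType) (wt : T -> R) (lab : T -> Y)
  (P : {set {set T}}) (A : {set T}) :
  (forall i, (0 < wt i)%R) ->
  partition P [set: T] ->
  (forall rho, rho \in P -> rho != set0) ->
  (forall rho y, rho \in P -> (0 < Zuy wt lab A rho y)%R) ->
  (rsum (fun rho => rho \in P) (Zu_eps_u wt lab A)
     <= Zn wt * eps_n wt lab P)%R /\
  (Zn wt * eps_n wt lab P
     <= rsum (fun rho => rho \in P)
          (fun rho => Zu_eps_u wt lab A rho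
             + wun wt A * lg (INR #|Y|)
             + rsum predT (fun y => (Zuy wt lab A rho y + wuny wt lab A y)
                   * lg ((Zu wt A rho + wun wt A) / Zuy wt lab A rho y)))%R)%R.
Proof.
move=> wpos _ hne hpos.
have w0 : forall i, 0 <= wt i by move=> i; left.
pose RH rho := rsum predT (fun y => - (Zly wt lab rho y * lg (Zly wt lab rho y / Zl wt rho))).
have hCpos : forall rho, rho \in P -> 0 < Zl wt rho.
  move=> rho hr; case/set0Pn: (hne _ hr) => i _.
  have := hpos rho (lab i) hr; have := Zuy_Zly lab A wpos rho (lab i);
  have := Zly_Zl lab wpos rho (lab i); lra.
have E : Zn wt * eps_n wt lab P = rsum (fun rho => rho \in P) RH.
  rewrite /eps_n rsum_scal; apply: rsum_ext => rho hr.
  have hC := hCpos rho hr; have hn := Zl_Zn wpos rho.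
  rewrite /RH.
  have -> : Zn wt * (Zl wt rho / Zn wt * - rsum predT (fun y => plg (Zly wt lab rho y / Zl wt rho)))
     = - Zl wt rho * rsum predT (fun y => plg (Zly wt lab rho y / Zl wt rho)) by field; lra.
  rewrite rsum_scal; apply: rsum_ext => y _.
  have hc : 0 < Zly wt lab rho y by have := hpos rho y hr; have := Zuy_Zly lab A wpos rho y; lra.
  have hq : 0 < Zly wt lab rho y / Zl wt rho by apply: Rdiv_lt_0_compat.
  rewrite /plg; destruct (Req_EM_T (Zly wt lab rho y / Zl wt rho) 0) as [h|h].
    lra.
  rewrite /=; field; lra.
rewrite E; split.
  apply: rsum_le => rho hr.
  have hC := hCpos rho hr.
  pose g y := / ln 2 * Zuy wt lab A rho y + - (Zu wt A rho / (Zl wt rho * ln 2)) * Zly wt lab rho y.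
  have g0 : rsum predT g = 0.
    rewrite /g rsum_plus -!rsum_scal sumZuy sumZly; have := ln2_pos => hL; field; lra.
  have -> : Zu_eps_u wt lab A rho = rsum predT (fun y => - (Zuy wt lab A rho y * lg (Zuy wt lab A rho y / Zu wt A rho))) + rsum predT g.
    rewrite g0 Rplus_0_r /Zu_eps_u rsum_opp.
    apply: rsum_ext => y _; lra.
  rewrite -rsum_plus /RH; apply: rsum_le => y _.
  apply: lower_term; [exact: hpos | exact: (Zuy_Zly _ _ wpos) | exact: (Zly_Zl _ wpos) | exact: (Zuy_Zu _ _ wpos)].
apply: rsum_le => rho hr.
have hY : 1 <= INR #|Y|.
  case/set0Pn: (hne _ hr) => i _.
  have : (0 < #|Y|)%nat by apply/card_gt0P; exists (lab i).
  move=> h; apply: (le_INR 1); exact/leP.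
have hlg : 0 <= lg (INR #|Y|).
  rewrite /lg; apply: Rmult_le_pos; last by left; apply: Rinv_0_lt_compat; exact: ln2_pos.
  rewrite -ln_1; apply: ln_le; lra.
have hw : 0 <= wun wt A by apply: rsum_ge0.
have hZ : 0 <= Zu_eps_u wt lab A rho.
  rewrite /Zu_eps_u rsum_opp.
  apply: rsum_ge0 => y _.
  have ha := hpos rho y hr; have hA := Zuy_Zu lab A wpos rho y.
  have : lg (Zuy wt lab A rho y / Zu wt A rho) <= 0.
    have := ln2_pos => hL.
    have : ln (Zuy wt lab A rho y / Zu wt A rho) <= 0.
      rewrite -ln_1; apply: ln_le; first by apply: Rdiv_lt_0_compat; lra.
      apply: (Rmult_le_reg_r (Zu wt A rho)); first lra.
      rewrite /Rdiv Rmult_assoc Rinv_l; lra.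
    have hi : 0 < / ln 2 by apply: Rinv_0_lt_compat.
    rewrite /lg /Rdiv; move: (ln _) => x hx; nra.
  nra.
have : RH rho <= rsum predT (fun y => (Zuy wt lab A rho y + wuny wt lab A y)
                   * lg ((Zu wt A rho + wun wt A) / Zuy wt lab A rho y)).
  apply: rsum_le => y _; apply: upper_term;
    [exact: hpos | exact: (Zuy_Zly _ _ wpos) | exact: (Zly_Zl _ wpos) | exact: (Zuy_Zu _ _ wpos) | exact: (Zly_split _ _ wpos) | exact: (Zl_split _ wpos)].
have : 0 <= wun wt A * lg (INR #|Y|) by apply: Rmult_le_pos.
lra.
Qed.
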